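(* Let $(V_1,\dots,V_n)$ be an $n$-tuple of doubly non-commuting isometries on $H$ and let $1\le l\le n$. If $V_1,\dots,V_l$ are pure isometries and $\dim\big(\bigcap_{i=1}^l\ker V_i^*\big)<\infty$, then $V_{l+1},\dots,V_n$ are unitary operators on $H$.
   Context: Fix $n\ge1$ and $z_{ij}\in\mathbb T$ ($i\ne j$) with $z_{ji}=\overline{z_{ij}}$; $(V_1,\dots,V_n)$ is doubly non-commuting if the $V_i$ are isometries with $V_i^*V_j=\overline{z_{ij}}V_jV_i^*$ for $i\ne j$. An isometry $S$ on $H$ is a pure isometry if $\{0\}$ is the only $S$-invariant subspace of $H$ on which $S$ is unitary. *)

(* Defs.v *)
From HB Require Import structures.
From mathcomp Require Import all_boot all_order all_algebra.
From mathcomp.real_closed Require Import complex.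
Set Implicit Arguments. Unset Strict Implicit. Unset Printing Implicit Defensive.
Import Order.TTheory GRing.Theory Num.Theory.
Local Open Scope ring_scope.

Section Hilbert.
Variables (R : rcfType) (H : lmodType R[i]) (ip : H -> H -> R[i]).

Definition inner_product : Prop :=
  [/\ forall (a : R[i]) (x y z : H), ip (a *: x + y) z = a * ip x z + ip y z,
      forall x y : H, ip y x = (ip x y)^*,
      forall x : H, 0 <= ip x x &
      forall x : H, ip x x = 0 -> x = 0].

Definition nrm2 (x : H) : R[i] := ip x x.

Definition converges (u : nat -> H) (x : H) : Prop :=
  forall e : R[i], 0 < e -> exists N : nat, forall m, (N <= m)%N -> nrm2 (u m - x) < e.

Definition cauchy (u : nat -> H) : Prop :=
  forall e : R[i], 0 < e -> exists N : nat,
    forall m k, (N <= m)%N -> (N <= k)%N -> nrm2 (u m - u k) < e.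

Definition hilbert : Prop :=
  inner_product /\ forall u, cauchy u -> exists x, converges u x.

Definition closed_subspace (M : H -> Prop) : Prop :=
  [/\ M 0,
      forall (a : R[i]) x y, M x -> M y -> M (a *: x + y) &
      forall u x, (forall k, M (u k)) -> converges u x -> M x].

Definition adjoint (T Ts : H -> H) : Prop :=
  forall x y, ip (T x) y = ip x (Ts y).

Definition isometry (T Ts : H -> H) : Prop := forall x, Ts (T x) = x.

Definition unitary (T Ts : H -> H) : Prop :=
  (forall x, Ts (T x) = x) /\ (forall x, T (Ts x) = x).

(* S pure isometry: {0} is the only S-invariant (closed) subspace M
   on which S is unitary, i.e. S maps M onto M *)
Definition pure_isometry (S Ss : H -> H) : Prop :=
  isometry S Ss /\
  forall M : H -> Prop, closed_subspace M ->
    (forall x, M x -> M (S x)) ->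
    (forall y, M y -> exists2 x, M x & S x = y) ->
    forall x, M x -> x = 0.

Definition finite_dim (M : H -> Prop) : Prop :=
  exists s : seq H, forall x, M x ->
    exists c : 'I_(size s) -> R[i], x = \sum_(k < size s) c k *: s`_k.

Definition doubly_noncommuting (n : nat) (z : 'I_n -> 'I_n -> R[i])
    (V Vs : 'I_n -> H -> H) : Prop :=
  [/\ forall i j, i != j -> `|z i j| = 1,
      forall i j, i != j -> z j i = (z i j)^*,
      forall i, adjoint (V i) (Vs i),
      forall i, isometry (V i) (Vs i) &
      forall i j, i != j -> forall x, Vs i (V j x) = (z i j)^* *: V j (Vs i x)].

End Hilbert.

(* Main.v *)
Require Import Defs.
From HB Require Import structures.
From mathcomp Require Import all_boot all_order all_algebra.
From mathcomp.real_closed Require Import complex.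
From mathcomp Require Import zify.
Import Order.TTheory GRing.Theory Num.Theory.
Local Open Scope ring_scope.

Section IP.
Context {R : rcfType} {H : lmodType R[i]} {ip : H -> H -> R[i]}.
Context (hip : inner_product ip).

Lemma ipLl a x y z : ip (a *: x + y) z = a * ip x z + ip y z.
Proof. by case: hip. Qed.
Lemma ipC x y : ip y x = (ip x y)^*.
Proof. by case: hip. Qed.
Lemma ip_ge0 x : 0 <= ip x x.
Proof. by case: hip. Qed.
Lemma ip_eq0 x : ip x x = 0 -> x = 0.
Proof. by case: hip => _ _ _; apply. Qed.

Lemma ip0l z : ip 0 z = 0.
Proof.
have := ipLl 1 0 0 z; rewrite scale1r addr0 mul1r => h.
by apply: (addrI (ip 0 z)); rewrite addr0 -h.
Qed.
Lemma ipDl x y z : ip (x + y) z = ip x z + ip y z.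
Proof. by rewrite -[x]scale1r ipLl mul1r scale1r. Qed.
Lemma ipZl a x z : ip (a *: x) z = a * ip x z.
Proof. by rewrite -[a *: x]addr0 ipLl ip0l addr0. Qed.
Lemma ipNl x z : ip (- x) z = - ip x z.
Proof. by rewrite -scaleN1r ipZl mulN1r. Qed.
Lemma ipBl x y z : ip (x - y) z = ip x z - ip y z.
Proof. by rewrite ipDl ipNl. Qed.
Lemma ip0r z : ip z 0 = 0.
Proof. by rewrite ipC ip0l conjC0. Qed.
Lemma ipDr x y z : ip z (x + y) = ip z x + ip z y.
Proof. by rewrite ipC ipDl rmorphD /= -!ipC. Qed.
Lemma ipZr a x z : ip z (a *: x) = a^* * ip z x.
Proof. by rewrite ipC ipZl rmorphM /= -ipC. Qed.
Lemma ipNr x z : ip z (- x) = - ip z x.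
Proof. by rewrite ipC ipNl rmorphN /= -ipC. Qed.
Lemma ipBr x y z : ip z (x - y) = ip z x - ip z y.
Proof. by rewrite ipDr ipNr. Qed.

Lemma ip_ext u v : (forall w, ip w u = ip w v) -> u = v.
Proof.
move=> h; apply/eqP; rewrite -subr_eq0; apply/eqP/ip_eq0.
by rewrite ipBr h subrr.
Qed.

Lemma nrm2N v : nrm2 ip (- v) = nrm2 ip v.
Proof. by rewrite /nrm2 ipNl ipNr opprK. Qed.

Lemma ip_suml (m : nat) (F : 'I_m -> H) y :
  ip (\sum_(k < m) F k) y = \sum_(k < m) ip (F k) y.
Proof.
by apply: (big_morph (fun x => ip x y)) => [a b|]; rewrite ?ipDl ?ip0l.
Qed.

Context {T : {linear H -> H}} {Ts : H -> H}.
Context (hadj : Defs.adjoint ip T Ts) (hiso : Defs.isometry T Ts).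

Lemma adjr x y : ip x (Ts y) = ip (T x) y.
Proof. by rewrite hadj. Qed.

Lemma TsL a x y : Ts (a *: x + y) = a *: Ts x + Ts y.
Proof.
apply: ip_ext => w.
by rewrite adjr ipDr ipZr ipDr ipZr !adjr.
Qed.
Lemma TsD x y : Ts (x + y) = Ts x + Ts y.
Proof. by have := TsL 1 x y; rewrite !scale1r. Qed.
Lemma Ts0 : Ts 0 = 0.
Proof.
have := TsD 0 0; rewrite addr0 => h.
by apply: (addrI (Ts 0)); rewrite addr0 -h.
Qed.
Lemma TsZ a x : Ts (a *: x) = a *: Ts x.
Proof. by rewrite -[a *: x]addr0 TsL Ts0 addr0. Qed.
Lemma TsN x : Ts (- x) = - Ts x.
Proof. by rewrite -scaleN1r TsZ scaleN1r. Qed.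
Lemma TsB x y : Ts (x - y) = Ts x - Ts y.
Proof. by rewrite TsD TsN. Qed.

Lemma ipT x y : ip (T x) (T y) = ip x y.
Proof. by rewrite hadj hiso. Qed.

Lemma pyth0 a q : Ts q = 0 -> nrm2 ip (T a + q) = nrm2 ip a + nrm2 ip q.
Proof.
move=> h0; rewrite /nrm2 ipDl !ipDr ipT.
rewrite [ip (T a) q]hadj h0 ip0r.
rewrite [ip q (T a)]ipC hadj h0 ip0r conjC0.
by rewrite addr0 add0r.
Qed.

Lemma pythag y : nrm2 ip y = nrm2 ip (Ts y) + nrm2 ip (y - T (Ts y)).
Proof.
rewrite -pyth0; first by rewrite addrC subrK.
by rewrite TsB hiso subrr.
Qed.

Lemma contr y : nrm2 ip (Ts y) <= nrm2 ip y.
Proof. by rewrite [X in _ <= X]pythag lerDl ip_ge0. Qed.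

Lemma Ts_closed u x : (forall k, Ts (u k) = 0) -> converges ip u x -> Ts x = 0.
Proof.
move=> hu hc; apply: ip_eq0; apply/eqP; apply/negPn/negP => hne.
have hpos : 0 < nrm2 ip (Ts x) by rewrite lt_def hne ip_ge0.
have [N hN] := hc _ hpos.
have := hN N (leqnn N).
have -> : nrm2 ip (u N - x) = nrm2 ip (x - u N) by rewrite -nrm2N opprB.
have -> : Ts x = Ts (x - u N) by rewrite TsB hu subr0.
by move=> h; have := lt_le_trans h (contr _); rewrite ltxx.
Qed.

End IP.

Section Ops.
Context {R : rcfType} {H : lmodType R[i]} {ip : H -> H -> R[i]}.
Context {n : nat} {z : 'I_n -> 'I_n -> R[i]} {V : 'I_n -> {linear H -> H}}
    {Vs : 'I_n -> H -> H}.
Context (hip : inner_product ip).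
Context (hdnc : doubly_noncommuting ip z (fun i => V i : H -> H) Vs).

Lemma zn i j : i != j -> `|z i j| = 1.
Proof. by case: hdnc => h *; apply: h. Qed.
Lemma adjV i : Defs.adjoint ip (V i) (Vs i).
Proof. by case: hdnc. Qed.
Lemma isoV i : Defs.isometry (V i) (Vs i).
Proof. by case: hdnc. Qed.
Lemma rel i j : i != j -> forall x, Vs i (V j x) = (z i j)^* *: V j (Vs i x).
Proof. by case: hdnc => _ _ _ _ h; apply: h. Qed.

Lemma VsB i x y : Vs i (x - y) = Vs i x - Vs i y.
Proof. exact: (TsB hip (adjV i)). Qed.
Lemma VsL i a x y : Vs i (a *: x + y) = a *: Vs i x + Vs i y.
Proof. exact: (TsL hip (adjV i)). Qed.
Lemma Vs0 i : Vs i 0 = 0.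
Proof. exact: (Ts0 hip (adjV i)). Qed.
Lemma ipV i x y : ip (V i x) (V i y) = ip x y.
Proof. exact: (ipT (adjV i) (isoV i)). Qed.

Lemma commV a b x : a != b -> V b (V a x) = (z a b)^* *: V a (V b x).
Proof.
move=> ab.
have hu : Vs a (V b (V a x)) = (z a b)^* *: V b x by rewrite rel // isoV.
have hn : nrm2 ip (V b (V a x) - V a (Vs a (V b (V a x)))) = 0.
  have := pythag hip (adjV a) (isoV a) (V b (V a x)).
  rewrite [in X in X = _]/nrm2 !ipV hu [nrm2 ip (_ *: _)]/nrm2 (ipZl hip) (ipZr hip) mulrA.
  rewrite -normCK norm_conjC zn // expr1n mul1r ipV => h.
  by apply: (addrI (ip x x)); rewrite addr0 -h.
have := ip_eq0 hip _ hn; move/eqP; rewrite subr_eq0 => /eqP ->.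
by rewrite hu linearZ.
Qed.

Lemma adjcomm a b y : a != b -> Vs a y = 0 -> Vs a (Vs b y) = 0.
Proof.
move=> ab h; apply: (ip_eq0 hip).
set w := Vs a (Vs b y).
rewrite {2}/w -adjV -adjV commV // (ipZl hip) adjV h (ip0r hip) ?mulr0 //.
Qed.

Definition Mset (j : 'I_n) (m : nat) (x : H) :=
  Vs j x = 0 /\ forall i : 'I_n, (i < m)%N -> Vs i x = 0.

Lemma M_closed j m : closed_subspace ip (Mset j m).
Proof.
split.
- by split; [rewrite Vs0 | move=> i _; rewrite Vs0].
- move=> a x y [hj hi] [hj' hi']; split; first by rewrite VsL hj hj' scaler0 addr0.
  by move=> i him; rewrite VsL hi // hi' // scaler0 addr0.
- move=> u x hu hc; split.
    by apply: (Ts_closed hip (adjV j) (isoV j) u) => // k; case: (hu k).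
  move=> i him.
  by apply: (Ts_closed hip (adjV i) (isoV i) u) => // k; case: (hu k) => _; apply.
Qed.


Lemma step (j : 'I_n) m (hm : (m < n)%N) : (m < j)%N ->
  pure_isometry ip (V (Ordinal hm)) (Vs (Ordinal hm)) ->
  (forall x, Mset j m.+1 x -> x = 0) -> forall x, Mset j m x -> x = 0.
Proof.
move=> mj [_ hp] hS.
set i0 := Ordinal hm.
have ne : forall i : 'I_n, (i < m)%N -> i != i0.
  by move=> i him; apply/eqP => e; move: him; rewrite e /= ltnn.
have nej : j != i0 by apply/eqP => e; move: mj; rewrite e /= ltnn.
apply: (hp (Mset j m)).
- exact: M_closed.
- move=> x [hj hi]; split; first by rewrite rel // hj linear0 scaler0.
  by move=> i him; rewrite rel ?ne // hi // linear0 scaler0.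
- move=> y [hj hi]; exists (Vs i0 y).
    split; first exact: adjcomm.
    by move=> i him; apply: adjcomm; [apply: ne | apply: hi].
  apply/eqP; rewrite -subr_eq0 -oppr_eq0 opprB; apply/eqP; apply: hS.
  split.
    by rewrite VsB rel // (adjcomm _ _ _ nej hj) linear0 scaler0 hj subr0.
  move=> i; rewrite ltnS leq_eqVlt => /orP [/eqP him|him].
    have -> : i = i0 by apply: val_inj.
    by rewrite VsB isoV subrr.
  by rewrite VsB rel ?ne // (adjcomm _ _ _ (ne _ him) (hi _ him)) linear0 scaler0 hi // subr0.
Qed.

Lemma base (j : 'I_n) l : (l <= j)%N ->
  finite_dim (fun x : H => forall i : 'I_n, (i < l)%N -> Vs i x = 0) ->
  forall x, Mset j l x -> x = 0.
Proof.
move=> lj [s hs] x [hj hW].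
apply/eqP/negPn/negP => hx0.
pose v k := iter k (V j) x.
have vW : forall k (i : 'I_n), (i < l)%N -> Vs i (v k) = 0.
  elim=> [|k IH] i hil; first exact: hW.
  rewrite /v iterS rel; last by apply/eqP => e; move: hil; rewrite e ltnNge lj.
  by rewrite -/(v k) IH // linear0 scaler0.
have vn : forall k, ip (v k) (v k) = ip x x.
  by elim=> [|k IH] //; rewrite /v iterS ipV.
have vo : forall p d, ip (v p) (v (p + d.+1)%N) = 0.
  elim=> [|p IH] d.
    rewrite ?add0n /v iterS -/(v d) (ipC hip) /= adjV hj (ip0r hip).
    by rewrite conjC0.
  by rewrite addSn /v !iterS ipV; apply: IH.
have vo' : forall p q, p != q -> ip (v p) (v q) = 0.
  move=> p q; case: (ltngtP p q) => // hpq _.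
    have -> : q = (p + (q - p.+1).+1)%N by lia.
    exact: vo.
  rewrite (ipC hip); have -> : p = (q + (p - q.+1).+1)%N by lia.
  by rewrite vo conjC0.
set N := size s.
have hc : forall k : 'I_N.+1, exists c : 'I_N -> R[i], v k = \sum_(t < N) c t *: s`_t.
  by move=> k; apply: hs => i hil; exact: vW.
have [c hcE] := fin_all_exists hc.
pose C : 'M[R[i]]_(N.+1, N) := \matrix_(k, t) c k t.
have nrf : ~~ row_free C.
  by apply/negP => /eqP e; have := rank_leq_col C; rewrite e ltnn.
have /rowV0Pn [a /sub_kermxP ha anz] : kermx C != 0 by rewrite kermx_eq0.
have hsum : \sum_(k < N.+1) a 0 k *: v k = 0.
  under eq_bigr do rewrite hcE scaler_sumr.
  rewrite exchange_big /=.
  apply: big1 => t _.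
  have -> : \sum_(i < N.+1) a 0 i *: (c i t *: s`_t) = (\sum_(i < N.+1) a 0 i * c i t) *: s`_t.
    by rewrite scaler_suml; apply: eq_bigr => k _; rewrite scalerA.
  have e : \sum_(k < N.+1) a 0 k * c k t = 0.
    have : (a *m C) 0 t = 0 by rewrite ha mxE.
    rewrite mxE => h; rewrite -[RHS]h; apply: eq_bigr => k _; by rewrite mxE.
  by rewrite e scale0r.
move/negP: anz; apply; apply/eqP/rowP => p; rewrite mxE.
have := congr1 (fun w => ip w (v p)) hsum; rewrite /= (ip0l hip) (ip_suml hip).
rewrite (bigD1 p) //= big1 ?addr0; last first.
  by move=> k kp; rewrite (ipZl hip) vo' ?mulr0 // val_eqE.
rewrite (ipZl hip) vn => /eqP; rewrite mulf_eq0 => /orP [/eqP //|].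
by move=> /eqP/(ip_eq0 hip _) ex; rewrite ex eqxx in hx0.
Qed.

End Ops.

Theorem corollary3p12 (R : rcfType) (H : lmodType R[i]) (ip : H -> H -> R[i])
    (n : nat) (z : 'I_n -> 'I_n -> R[i]) (V : 'I_n -> {linear H -> H})
    (Vs : 'I_n -> H -> H) (l : nat) :
  hilbert ip ->
  doubly_noncommuting ip z (fun i => V i : H -> H) Vs ->
  (1 <= l <= n)%N ->
  (forall i : 'I_n, (i < l)%N -> pure_isometry ip (V i) (Vs i)) ->
  finite_dim (fun x : H => forall i : 'I_n, (i < l)%N -> Vs i x = 0) ->
  forall i : 'I_n, (l <= i)%N -> unitary (V i) (Vs i).
Proof.
move=> [hip _] hd /andP[l1 ln] hpure hfin i li.
split; first exact: (isoV hd).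
have key : forall k, (k <= l)%N -> forall x, Mset (Vs:=Vs) i (l - k) x -> x = 0.
  elim=> [|k IH] hk.
    by rewrite subn0 => x; apply: (base hip hd i l li hfin x).
  have hm : (l - k.+1 < n)%N by lia.
  apply: (step hip hd i (l - k.+1) hm).
  - have := ltn_ord i; lia.
  - apply: hpure => /=; lia.
  - have -> : ((l - k.+1).+1 = l - k)%N by lia.
    by apply: IH; lia.
move=> x; apply/eqP; rewrite eq_sym -subr_eq0; apply/eqP.
apply: (key l (leqnn l)); rewrite subnn; split => //.
by rewrite (VsB hip hd) (isoV hd) subrr.
Qed.
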